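(* Let $E$ be a regular biordered set satisfying: (E1) there exists an element $0\in E$ such that $0\,\omega\,e$ for every $e\in E$; (E2) there exists a map $E\to E$, $e\mapsto e'$, such that for all $e,f\in E$: (i) $(e')'=e$; (ii) $f\,\omega^l\,e$ if and only if $e'\,\omega^r\,f'$; (iii) $f\,\omega^l\,e'$ if and only if $M(f,e)=\{0\}$. Then there exists a strongly regular Baer semigroup $S$ such that $E$ is (isomorphic to) the biordered set of idempotents of $S$.
   Context: For a semigroup $S$, its biordered set $E(S)$ is the set of idempotents of $S$ regarded as a partial algebra: for $e,f\in E(S)$ the product $ef$ (computed in $S$) is defined exactly when $\{ef,fe\}\cap\{e,f\}\neq\emptyset$. A semigroup is regular if for every $x$ there is $y$ with $xyx=x$. A regular biordered set is a partial algebra isomorphic to $E(S)$ for some regular semigroup $S$ (equivalently, a biordered set in Nambooripad's axiomatic sense satisfying the regularity axiom). In a biordered set $E$: $\omega^l=\{(e,f): ef=e\}$, $\omega^r=\{(e,f): fe=e\}$, $\omega=\omega^l\cap\omega^r$; $M(e,f)=\{g\in E: g\,\omega^l\,e \text{ and } g\,\omega^r\,f\}$. For a semigroup $S$ with zero $0$, the left annihilator of $s$ is $\{x\in S: xs=0\}$ and the right annihilator is $\{x\in S: sx=0\}$. $S$ is a strongly regular Baer semigroup if the set of left annihilators of elements of $S$ equals the set of principal left ideals of $S$, and the set of right annihilators of elements of $S$ equals the set of principal right ideals of $S$. *)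

(* Defs.v *)
Record semigroup := Semigroup {
  sg_car :> Type;
  sg_op : sg_car -> sg_car -> sg_car;
  sg_assoc : forall x y z, sg_op x (sg_op y z) = sg_op (sg_op x y) z
}.

Definition regular_semigroup (S : semigroup) : Prop :=
  forall x : S, exists y : S, sg_op S (sg_op S x y) x = x.

Definition idempotent (S : semigroup) (x : S) : Prop := sg_op S x x = x.

(** Partial algebras with one binary partial operation, given by the graph
    of the operation: [pa_prod e f g] means "ef is defined and equals g". *)
Record partial_algebra := PartialAlgebra {
  pa_car :> Type;
  pa_prod : pa_car -> pa_car -> pa_car -> Prop
}.

(** The biordered set E(S) of a semigroup S: idempotents, with ef defined
    exactly when {ef, fe} meets {e, f}. *)
Definition biordered_of (S : semigroup) : partial_algebra :=
  PartialAlgebra {x : S | idempotent S x}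
    (fun e f g =>
       (sg_op S (proj1_sig e) (proj1_sig f) = proj1_sig e \/
        sg_op S (proj1_sig e) (proj1_sig f) = proj1_sig f \/
        sg_op S (proj1_sig f) (proj1_sig e) = proj1_sig e \/
        sg_op S (proj1_sig f) (proj1_sig e) = proj1_sig f) /\
       proj1_sig g = sg_op S (proj1_sig e) (proj1_sig f)).

Definition pa_iso (A B : partial_algebra) : Prop :=
  exists (phi : A -> B) (psi : B -> A),
    (forall a, psi (phi a) = a) /\ (forall b, phi (psi b) = b) /\
    (forall e f g, pa_prod A e f g <-> pa_prod B (phi e) (phi f) (phi g)).

Definition regular_biordered_set (E : partial_algebra) : Prop :=
  exists S : semigroup, regular_semigroup S /\ pa_iso E (biordered_of S).

Definition omega_l (E : partial_algebra) (e f : E) : Prop := pa_prod E e f e.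
Definition omega_r (E : partial_algebra) (e f : E) : Prop := pa_prod E f e e.
Definition omega (E : partial_algebra) (e f : E) : Prop :=
  omega_l E e f /\ omega_r E e f.

Definition M_set (E : partial_algebra) (e f : E) (g : E) : Prop :=
  omega_l E g e /\ omega_r E g f.

Definition is_zero (S : semigroup) (z : S) : Prop :=
  forall x : S, sg_op S z x = z /\ sg_op S x z = z.

Definition left_ann (S : semigroup) (z s : S) (x : S) : Prop := sg_op S x s = z.
Definition right_ann (S : semigroup) (z s : S) (x : S) : Prop := sg_op S s x = z.

Definition princ_left (S : semigroup) (a : S) (x : S) : Prop :=
  x = a \/ exists y : S, x = sg_op S y a.
Definition princ_right (S : semigroup) (a : S) (x : S) : Prop :=
  x = a \/ exists y : S, x = sg_op S a y.

Definition same_set {T : Type} (A B : T -> Prop) : Prop := forall x, A x <-> B x.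

Definition strongly_regular_Baer (S : semigroup) (z : S) : Prop :=
  is_zero S z /\
  (forall s : S, exists a : S, same_set (left_ann S z s) (princ_left S a)) /\
  (forall a : S, exists s : S, same_set (left_ann S z s) (princ_left S a)) /\
  (forall s : S, exists a : S, same_set (right_ann S z s) (princ_right S a)) /\
  (forall a : S, exists s : S, same_set (right_ann S z s) (princ_right S a)).

(* Main.v *)
Require Import Defs.
From Stdlib Require Import Classical ClassicalEpsilon ProofIrrelevance.

Local Notation "x ** y" := (sg_op _ x y) (at level 40, left associativity).

Lemma zuz (S : semigroup) (reg : regular_semigroup S) (z : S)
  (zi : z ** z = z)
  (zw : forall g : S, g ** g = g -> z ** g = z /\ g ** z = z) (u : S) :
  z ** u ** z = u ** z.
Proof.
  assert (A : forall x y w : S, x ** (y ** w) = x ** y ** w) by apply sg_assoc.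
  set (h := u ** z). set (a := z ** u ** z).
  destruct (reg a) as [a' Ha].
  assert (ia : a' ** a ** (a' ** a) = a' ** a).
  { rewrite A. rewrite <- (A a' a a'), <- (A a' (a ** a') a). rewrite Ha. reflexivity. }
  set (b := z ** a' ** z).
  assert (bh : b ** h = z).
  { unfold b, h. rewrite !A. rewrite <- (A (z ** a' ** z) u z).
    rewrite <- (A (z ** a') z (u ** z)). rewrite <- (A z a' (z ** (u ** z))).
    rewrite (A z u z). fold a. apply (zw _ ia). }
  assert (ba : b ** a = z).
  { unfold a. rewrite <- (A z u z). fold h. rewrite A. unfold b.
    rewrite <- (A (z ** a') z z). rewrite zi. exact bh. }
  assert (hb : h ** b = z).
  { assert (ihb : h ** b ** (h ** b) = h ** b).
    { rewrite A. rewrite <- (A h b h). rewrite bh. unfold h, b.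
      rewrite <- (A u z z), zi. rewrite !A. rewrite <- (A u z z), zi. reflexivity. }
    destruct (zw _ ihb) as [_ H2]. rewrite <- H2.
    unfold b. rewrite !A. rewrite <- (A _ z z), zi. reflexivity. }
  transitivity (z ** a).
  - unfold a. rewrite !A. rewrite zi. reflexivity.
  - rewrite <- hb. rewrite <- A. rewrite ba. unfold h. rewrite <- A, zi. reflexivity.
Qed.

Definition dual (S : semigroup) : semigroup.
Proof.
  refine (Semigroup (sg_car S) (fun x y => sg_op S y x) _).
  intros x y w. symmetry. apply sg_assoc.
Defined.

Lemma zuz' (S : semigroup) (reg : regular_semigroup S) (z : S)
  (zi : z ** z = z)
  (zw : forall g : S, g ** g = g -> z ** g = z /\ g ** z = z) (u : S) :
  z ** u ** z = z ** u.
Proof.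
  assert (reg' : regular_semigroup (dual S)).
  { intro x. destruct (reg x) as [y Hy]. exists y. simpl.
    rewrite sg_assoc. exact Hy. }
  pose proof (zuz (dual S) reg' z zi) as H. simpl in H.
  rewrite <- sg_assoc. apply H.
  intros g Hg. destruct (zw g Hg). split; assumption.
Qed.

Definition K (S : semigroup) (z w : S) : Prop := z ** w = w /\ w ** z = w.



Lemma K_l (S : semigroup) (reg : regular_semigroup S) (z : S)
  (zi : z ** z = z)
  (zw : forall g : S, g ** g = g -> z ** g = z /\ g ** z = z) (y w : S) :
  K S z w -> K S z (y ** w).
Proof.
  intros [H1 H2]. split.
  - transitivity (z ** y ** z ** w).
    + rewrite <- (sg_assoc _ (z ** y) z w), H1, sg_assoc. reflexivity.
    + rewrite (zuz S reg z zi zw y). rewrite <- sg_assoc, H1. reflexivity.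
  - rewrite <- sg_assoc, H2. reflexivity.
Qed.

Lemma K_r (S : semigroup) (reg : regular_semigroup S) (z : S)
  (zi : z ** z = z)
  (zw : forall g : S, g ** g = g -> z ** g = z /\ g ** z = z) (y w : S) :
  K S z w -> K S z (w ** y).
Proof.
  intros [H1 H2]. split.
  - rewrite sg_assoc, H1. reflexivity.
  - transitivity (w ** (z ** y ** z)).
    + rewrite !sg_assoc, H2. reflexivity.
    + rewrite (zuz' S reg z zi zw y). rewrite sg_assoc, H2. reflexivity.
Qed.

Lemma K_z (S : semigroup) (z : S) (zi : z ** z = z) : K S z z.
Proof. split; exact zi. Qed.

Lemma K_idem (S : semigroup) (z : S)
  (zw : forall g : S, g ** g = g -> z ** g = z /\ g ** z = z) (g : S) :
  g ** g = g -> K S z g -> g = z.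
Proof. intros Hg [H1 _]. destruct (zw g Hg) as [H3 _]. congruence. Qed.

Definition N (S : semigroup) (z w : S) : S :=
  if excluded_middle_informative (K S z w) then z else w.

Lemma N_K (S : semigroup) (z w : S) : K S z w -> N S z w = z.
Proof. intro H. unfold N. destruct (excluded_middle_informative _); tauto. Qed.
Lemma N_nK (S : semigroup) (z w : S) : ~ K S z w -> N S z w = w.
Proof. intro H. unfold N. destruct (excluded_middle_informative _); tauto. Qed.

Lemma N_eqz (S : semigroup) (z w : S) (zi : z ** z = z) : N S z w = z <-> K S z w.
Proof.
  split; intro H.
  - destruct (classic (K S z w)) as [k|k]; auto. rewrite N_nK in H; auto.
    subst. apply K_z; auto.
  - apply N_K; auto.
Qed.

Lemma NN (S : semigroup) (z w : S) (zi : z ** z = z) : N S z (N S z w) = N S z w.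
Proof.
  destruct (classic (K S z w)) as [k|k].
  - rewrite (N_K _ _ _ k). apply N_K, K_z; auto.
  - rewrite (N_nK _ _ _ k). apply N_nK; auto.
Qed.

Lemma N_l (S : semigroup) (reg : regular_semigroup S) (z : S)
  (zi : z ** z = z)
  (zw : forall g : S, g ** g = g -> z ** g = z /\ g ** z = z) (u v : S) :
  N S z (N S z u ** v) = N S z (u ** v).
Proof.
  destruct (classic (K S z u)) as [k|k].
  - rewrite (N_K _ _ _ k). rewrite !N_K; auto.
    + apply K_r; auto.
    + apply K_r; auto. apply K_z; auto.
  - rewrite (N_nK _ _ _ k). reflexivity.
Qed.

Lemma N_r (S : semigroup) (reg : regular_semigroup S) (z : S)
  (zi : z ** z = z)
  (zw : forall g : S, g ** g = g -> z ** g = z /\ g ** z = z) (u v : S) :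
  N S z (u ** N S z v) = N S z (u ** v).
Proof.
  destruct (classic (K S z v)) as [k|k].
  - rewrite (N_K _ _ _ k). rewrite !N_K; auto.
    + apply K_l; auto.
    + apply K_l; auto. apply K_z; auto.
  - rewrite (N_nK _ _ _ k). reflexivity.
Qed.

Lemma sig_eq {A : Type} {P : A -> Prop} (x y : {a | P a}) :
  proj1_sig x = proj1_sig y -> x = y.
Proof.
  destruct x as [x px], y as [y py]; simpl; intro H; subst. f_equal. apply proof_irrelevance.
Qed.

Definition Qsg (S : semigroup) (reg : regular_semigroup S) (z : S)
  (zi : z ** z = z)
  (zw : forall g : S, g ** g = g -> z ** g = z /\ g ** z = z) : semigroup.
Proof.
  refine (Semigroup {x : S | N S z x = x}
    (fun x y => exist _ (N S z (proj1_sig x ** proj1_sig y)) (NN S z _ zi)) _).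
  intros x y w. apply sig_eq. simpl.
  rewrite N_l, N_r; auto. rewrite sg_assoc. reflexivity.
Defined.
Theorem theorem3p1 (E : partial_algebra) :
  regular_biordered_set E ->
  (exists z : E,
     (forall e : E, omega E z e) /\
     exists c : E -> E,
       (forall e, c (c e) = e) /\
       (forall e f, omega_l E f e <-> omega_r E (c e) (c f)) /\
       (forall e f, omega_l E f (c e) <-> same_set (M_set E f e) (fun g => g = z))) ->
  exists (S : semigroup) (z0 : S),
    strongly_regular_Baer S z0 /\ pa_iso E (biordered_of S).
Proof.
  intros [S [reg [phi [psi [H1 [H2 H3]]]]]] [z [hz [c [hc1 [hc2 hc3]]]]].
  assert (A : forall x y w : S, x ** (y ** w) = x ** y ** w) by apply sg_assoc.
  set (hat := fun e : E => proj1_sig (phi e) : S).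
  assert (ide : forall e, hat e ** hat e = hat e) by (intro e; exact (proj2_sig (phi e))).
  assert (ol : forall a b, omega_l E a b <-> hat a ** hat b = hat a).
  { intros a b. unfold omega_l. rewrite H3. simpl. split.
    - intros [_ H]. symmetry. exact H.
    - intro H. split; [left; exact H | symmetry; exact H]. }
  assert (or : forall a b, omega_r E a b <-> hat b ** hat a = hat a).
  { intros a b. unfold omega_r. rewrite H3. simpl. split.
    - intros [_ H]. symmetry. exact H.
    - intro H. split; [right; left; exact H | symmetry; exact H]. }
  assert (el : forall (h : S) (Hh : idempotent S h), hat (psi (exist _ h Hh)) = h).
  { intros h Hh. unfold hat. rewrite H2. reflexivity. }
  assert (inj : forall a b, hat a = hat b -> a = b).
  { intros a b H. rewrite <- (H1 a), <- (H1 b). f_equal. apply sig_eq. exact H. }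
  set (zS := hat z).
  assert (zi : zS ** zS = zS) by apply ide.
  assert (zw : forall g : S, g ** g = g -> zS ** g = zS /\ g ** zS = zS).
  { intros g Hg. destruct (hz (psi (exist _ g Hg))) as [o1 o2].
    apply ol in o1. apply or in o2. rewrite el in o1, o2. split; assumption. }
  assert (Kz : K S zS zS) by (apply K_z; exact zi).
  assert (Kl := K_l S reg zS zi zw). assert (Kr := K_r S reg zS zi zw).
  assert (Mlem : forall f e, same_set (M_set E f e) (fun g => g = z) <-> K S zS (hat f ** hat e)).
  { intros f e. split.
    - intro HM. destruct (reg (hat f ** hat e)) as [w' Hw].
      set (w := hat f ** hat e) in *.
      set (v := w' ** w ** w').
      assert (Hv1 : w ** v ** w = w).
      { unfold v. rewrite !A. rewrite Hw. rewrite Hw. reflexivity. }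
      assert (Hv2 : v ** w ** v = v).
      { transitivity (w' ** (w ** w' ** w) ** w' ** w ** w').
        { unfold v. rewrite !A. reflexivity. }
        rewrite Hw. transitivity (w' ** (w ** w' ** w) ** w').
        { rewrite !A. reflexivity. }
        rewrite Hw. reflexivity. }
      set (h := hat e ** v ** hat f).
      assert (hh : idempotent S h).
      { unfold idempotent.
        transitivity (hat e ** (v ** w ** v) ** hat f).
        + unfold h, w. rewrite !A. reflexivity.
        + rewrite Hv2. reflexivity. }
      assert (HMh := proj1 (HM (psi (exist _ h hh)))).
      assert (hz' : h = zS).
      { rewrite <- (el h hh). unfold zS. f_equal. apply HMh. split.
        - apply ol. rewrite el. unfold h. rewrite <- (A _ (hat f) (hat f)), ide. reflexivity.
        - apply or. rewrite el. unfold h. rewrite !A, ide. reflexivity. }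
      rewrite <- Hv1.
      replace (w ** v ** w) with (hat f ** h ** hat e).
      2:{ unfold h, w. rewrite !A. reflexivity. }
      { rewrite hz'. destruct (zw (hat f) (ide f)) as [_ ->]. destruct (zw (hat e) (ide e)) as [-> _].
        exact Kz. }
    - intros HK g. split.
      + intros [o1 o2]. apply ol in o1. apply or in o2. apply inj.
        apply (K_idem S zS zw (hat g) (ide g)).
        assert (Hg : hat g = hat g ** hat f ** hat e ** hat g).
        { rewrite o1, <- A, o2, ide. reflexivity. }
        rewrite Hg. apply (Kr (hat g)).
        replace (hat g ** hat f ** hat e) with (hat g ** (hat f ** hat e)) by (rewrite !A; reflexivity).
        apply Kl. exact HK.
      + intros ->. split.
        * apply ol. apply zw, ide.
        * apply or. apply zw, ide. }
  assert (L1 : forall e x, K S zS (x ** hat e) <-> x ** hat (c e) = x).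
  { intros e x. destruct (reg x) as [t Ht].
    assert (fi : idempotent S (t ** x)).
    { unfold idempotent. transitivity (t ** (x ** t ** x)); [rewrite !A; reflexivity | rewrite Ht; reflexivity]. }
    set (f := psi (exist _ (t ** x) fi)).
    assert (hf : hat f = t ** x) by apply el.
    assert (xf : x ** hat f = x) by (rewrite hf, A; exact Ht).
    split.
    - intro HK. assert (HK' : K S zS (hat f ** hat e)). { rewrite hf, <- A. apply Kl. exact HK. }
      apply Mlem in HK'. apply hc3 in HK'. apply ol in HK'.
      rewrite <- xf at 1. rewrite <- A, HK'. exact xf.
    - intro Hx. assert (H : omega_l E f (c e)). { apply ol. rewrite hf. rewrite <- A, Hx. reflexivity. }
      apply hc3, Mlem in H. rewrite <- xf. rewrite <- A. apply Kl. exact H. }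
  assert (R1 : forall e x, K S zS (hat e ** x) <-> hat (c e) ** x = x).
  { intros e x. destruct (reg x) as [t Ht].
    assert (fi : idempotent S (x ** t)).
    { unfold idempotent. transitivity (x ** t ** x ** t); [rewrite !A; reflexivity | rewrite Ht; reflexivity]. }
    set (f := psi (exist _ (x ** t) fi)).
    assert (hf : hat f = x ** t) by apply el.
    assert (fx : hat f ** x = x) by (rewrite hf; exact Ht).
    split.
    - intro HK. assert (HK' : K S zS (hat e ** hat f)). { rewrite hf, A. apply Kr. exact HK. }
      apply Mlem in HK'. apply (proj2 (hc3 f e)) in HK'. apply (proj1 (hc2 (c f) e)) in HK'.
      rewrite hc1 in HK'. apply or in HK'.
      rewrite <- fx at 1. rewrite A, HK'. exact fx.
    - intro Hx. assert (H : omega_r E f (c e)) by (apply or; rewrite hf, A, Hx; reflexivity).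
      rewrite <- (hc1 f) in H. apply (proj2 (hc2 (c f) e)) in H.
      apply hc3, Mlem in H. rewrite <- fx. rewrite A. apply Kr. exact H. }
  assert (Nid : forall h : S, h ** h = h -> N S zS h = h).
  { intros h Hh. destruct (classic (K S zS h)) as [k|k].
    - rewrite (N_K _ _ _ k). symmetry. exact (K_idem S zS zw h Hh k).
    - apply N_nK; exact k. }
  set (Q := Qsg S reg zS zi zw).
  assert (QeqS : forall x y : Q, x = y <-> proj1_sig x = proj1_sig y).
  { intros x y. split; [intros ->; reflexivity | apply sig_eq]. }
  assert (Qop : forall x y : Q, proj1_sig (sg_op Q x y) = N S zS (proj1_sig x ** proj1_sig y)) by reflexivity.
  set (z0 := exist (fun x => N S zS x = x) zS (N_K S zS zS Kz) : Q).
  assert (leftann : forall s x : Q, left_ann Q z0 s x <-> K S zS (proj1_sig x ** proj1_sig s)).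
  { intros s x. unfold left_ann. rewrite QeqS, Qop. simpl. apply N_eqz. exact zi. }
  assert (rightann : forall s x : Q, right_ann Q z0 s x <-> K S zS (proj1_sig s ** proj1_sig x)).
  { intros s x. unfold right_ann. rewrite QeqS, Qop. simpl. apply N_eqz. exact zi. }
  assert (princL : forall (a : Q) (t : S), proj1_sig a ** t ** proj1_sig a = proj1_sig a ->
            forall x : Q, princ_left Q a x <-> proj1_sig x ** (t ** proj1_sig a) = proj1_sig x).
  { intros a t Ht x. unfold princ_left. split.
    - intros [-> | [y ->]].
      + rewrite A. exact Ht.
      + rewrite Qop. destruct (classic (K S zS (proj1_sig y ** proj1_sig a))) as [k|k].
        * rewrite (N_K _ _ _ k). apply zw.
          transitivity (t ** (proj1_sig a ** t ** proj1_sig a)); [rewrite !A; reflexivity | rewrite Ht; reflexivity].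
        * rewrite (N_nK _ _ _ k). rewrite <- A, (A _ t), Ht. reflexivity.
    - intro Hx. right.
      exists (exist (fun x => N S zS x = x) (N S zS (proj1_sig x ** t)) (NN S zS _ zi)).
      apply sig_eq. rewrite Qop. simpl. rewrite N_l; auto. rewrite <- A, Hx.
      symmetry. exact (proj2_sig x). }
  assert (princR : forall (a : Q) (t : S), proj1_sig a ** t ** proj1_sig a = proj1_sig a ->
            forall x : Q, princ_right Q a x <-> proj1_sig a ** t ** proj1_sig x = proj1_sig x).
  { intros a t Ht x. unfold princ_right. split.
    - intros [-> | [y ->]].
      + exact Ht.
      + rewrite Qop. destruct (classic (K S zS (proj1_sig a ** proj1_sig y))) as [k|k].
        * rewrite (N_K _ _ _ k). apply zw.
          transitivity (proj1_sig a ** t ** proj1_sig a ** t); [rewrite !A; reflexivity | rewrite Ht; reflexivity].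
        * rewrite (N_nK _ _ _ k). rewrite A, Ht. reflexivity.
    - intro Hx. right.
      exists (exist (fun x => N S zS x = x) (N S zS (t ** proj1_sig x)) (NN S zS _ zi)).
      apply sig_eq. rewrite Qop. simpl. rewrite N_r; auto. rewrite A, Hx.
      symmetry. exact (proj2_sig x). }
  assert (idQ : forall h : S, h ** h = h -> N S zS h = h) by exact Nid.
  exists Q, z0. split.
  { split; [| split; [| split; [| split]]].
    - intro x. split; apply sig_eq; rewrite Qop; simpl; apply N_K.
      + apply Kr. exact Kz.
      + apply Kl. exact Kz.
    - intro s. destruct (reg (proj1_sig s)) as [t Ht].
      assert (ei : idempotent S (proj1_sig s ** t)).
      { unfold idempotent. transitivity (proj1_sig s ** t ** proj1_sig s ** t); [rewrite !A; reflexivity | rewrite Ht; reflexivity]. }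
      set (e := psi (exist _ _ ei)).
      assert (he : hat e = proj1_sig s ** t) by apply el.
      exists (exist (fun x => N S zS x = x) (hat (c e)) (Nid _ (ide (c e)))).
      intro x. rewrite leftann. rewrite (princL _ (hat (c e))); simpl.
      2:{ rewrite !ide. reflexivity. }
      rewrite ide. rewrite <- L1. rewrite he. split; intro H.
      + rewrite A. apply Kr. exact H.
      + rewrite <- Ht. rewrite !A. apply Kr. rewrite <- A. exact H.
    - intro a. destruct (reg (proj1_sig a)) as [t Ht].
      assert (fi : idempotent S (t ** proj1_sig a)).
      { unfold idempotent. transitivity (t ** (proj1_sig a ** t ** proj1_sig a)); [rewrite !A; reflexivity | rewrite Ht; reflexivity]. }
      set (f := psi (exist _ _ fi)).
      assert (hf : hat f = t ** proj1_sig a) by apply el.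
      exists (exist (fun x => N S zS x = x) (hat (c f)) (Nid _ (ide (c f)))).
      intro x. rewrite leftann. rewrite (princL _ t Ht). simpl.
      rewrite L1, hc1, hf. tauto.
    - intro s. destruct (reg (proj1_sig s)) as [t Ht].
      assert (ei : idempotent S (t ** proj1_sig s)).
      { unfold idempotent. transitivity (t ** (proj1_sig s ** t ** proj1_sig s)); [rewrite !A; reflexivity | rewrite Ht; reflexivity]. }
      set (e := psi (exist _ _ ei)).
      assert (he : hat e = t ** proj1_sig s) by apply el.
      exists (exist (fun x => N S zS x = x) (hat (c e)) (Nid _ (ide (c e)))).
      intro x. rewrite rightann. rewrite (princR _ (hat (c e))); simpl.
      2:{ rewrite !ide. reflexivity. }
      rewrite ide. rewrite <- R1. rewrite he. split; intro H.
      + rewrite <- A. apply Kl. exact H.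
      + rewrite <- Ht. rewrite <- !A. apply Kl. rewrite A. exact H.
    - intro a. destruct (reg (proj1_sig a)) as [t Ht].
      assert (fi : idempotent S (proj1_sig a ** t)).
      { unfold idempotent. transitivity (proj1_sig a ** t ** proj1_sig a ** t); [rewrite !A; reflexivity | rewrite Ht; reflexivity]. }
      set (f := psi (exist _ _ fi)).
      assert (hf : hat f = proj1_sig a ** t) by apply el.
      exists (exist (fun x => N S zS x = x) (hat (c f)) (Nid _ (ide (c f)))).
      intro x. rewrite rightann. rewrite (princR _ t Ht). simpl.
      rewrite R1, hc1, hf. tauto. }
  assert (QidS : forall q : Q, sg_op Q q q = q -> proj1_sig q ** proj1_sig q = proj1_sig q).
  { intros q Hq. apply QeqS in Hq. rewrite Qop in Hq.
    destruct (classic (K S zS (proj1_sig q ** proj1_sig q))) as [k|k].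
    - rewrite (N_K _ _ _ k) in Hq. rewrite <- Hq. exact zi.
    - rewrite (N_nK _ _ _ k) in Hq. exact Hq. }
  assert (QidQ : forall e : E, idempotent Q (exist (fun x => N S zS x = x) (hat e) (Nid _ (ide e)))).
  { intro e. unfold idempotent. apply sig_eq. rewrite Qop. simpl. rewrite ide. apply Nid, ide. }
  assert (Na : forall a b : S, a ** a = a -> b ** b = b -> (N S zS (a ** b) = a <-> a ** b = a)).
  { intros a b Ha Hb. split; intro H.
    - destruct (classic (K S zS (a ** b))) as [k|k].
      + rewrite (N_K _ _ _ k) in H. rewrite <- H. apply zw. exact Hb.
      + rewrite (N_nK _ _ _ k) in H. exact H.
    - rewrite H. apply Nid. exact Ha. }
  assert (Nb : forall a b : S, a ** a = a -> b ** b = b -> (N S zS (a ** b) = b <-> a ** b = b)).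
  { intros a b Ha Hb. split; intro H.
    - destruct (classic (K S zS (a ** b))) as [k|k].
      + rewrite (N_K _ _ _ k) in H. rewrite <- H. apply zw. exact Ha.
      + rewrite (N_nK _ _ _ k) in H. exact H.
    - rewrite H. apply Nid. exact Hb. }
  exists (fun e => exist (fun q : Q => idempotent Q q) _ (QidQ e)).
  exists (fun q => psi (exist (fun x => idempotent S x) (proj1_sig (proj1_sig q)) (QidS _ (proj2_sig q)))).
  split; [| split].
  - intro e. transitivity (psi (phi e)); [| apply H1]. f_equal. apply sig_eq. reflexivity.
  - intro q. apply sig_eq. apply sig_eq. simpl. unfold hat. rewrite H2. reflexivity.
  - intros e f g. rewrite H3. unfold biordered_of, pa_prod. rewrite !QeqS, !Qop. simpl.
    fold (hat e) (hat f) (hat g).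
    rewrite (Na _ _ (ide e) (ide f)), (Nb _ _ (ide e) (ide f)), (Na _ _ (ide f) (ide e)), (Nb _ _ (ide f) (ide e)).
    assert (Hid : (hat e ** hat f = hat e \/ hat e ** hat f = hat f \/ hat f ** hat e = hat e \/ hat f ** hat e = hat f) ->
                  N S zS (hat e ** hat f) = hat e ** hat f).
    { intro D. apply Nid. destruct D as [D|[D|[D|D]]]; rewrite ?D.
      - apply ide.
      - apply ide.
      - transitivity (hat e ** (hat f ** hat e) ** hat f); [rewrite !A; reflexivity|]. rewrite D, ide. reflexivity.
      - transitivity (hat e ** (hat f ** hat e) ** hat f); [rewrite !A; reflexivity|]. rewrite D, <- A, ide. reflexivity. }
    split; intros [D G]; split; auto; rewrite Hid in *; auto.
Qed.
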